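(* Let $p,q,r\in\mathbb N$ and let $\mathbf K$ be a commutative field. Suppose $A_1,\dots,A_d\in\mathrm{Rec}_{p\times r}(\mathbf K)$ and $B_1,\dots,B_e\in\mathrm{Rec}_{r\times q}(\mathbf K)$ are such that there exist matrices $\rho_{\mathcal A}(s,u)\in\mathbf K^{d\times d}$ ($0\le s<p$, $0\le u<r$) and $\rho_{\mathcal B}(u,t)\in\mathbf K^{e\times e}$ ($0\le u<r$, $0\le t<q$) with $\rho(s,u)A_i=\sum_{k=1}^d\rho_{\mathcal A}(s,u)_{k,i}A_k$ and $\rho(u,t)B_j=\sum_{l=1}^e\rho_{\mathcal B}(u,t)_{l,j}B_l$ for all $i,j$. Set $C_{ij}=A_iB_j\in\mathrm{Rec}_{p\times q}(\mathbf K)$. Then $C_{ij}[\emptyset,\emptyset]=A_i[\emptyset,\emptyset]\,B_j[\emptyset,\emptyset]$ and, for all $0\le s<p$, $0\le t<q$, $$\rho(s,t)C_{ij}=\sum_{k=1}^d\sum_{l=1}^e\Big(\sum_{u=0}^{r-1}\rho_{\mathcal A}(s,u)_{k,i}\,\rho_{\mathcal B}(u,t)_{l,j}\Big)C_{kl}.$$ Thus the $C_{ij}$ span a recursively closed subspace with shift matrices $\rho_{\mathcal C}(s,t)_{kl,ij}=\sum_{u=0}^{r-1}\rho_{\mathcal A}(s,u)_{k,i}\rho_{\mathcal B}(u,t)_{l,j}$.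
   Context: For $p,q,l\in\mathbb N$, $\mathcal M_{p\times q}^l$ is the set of pairs $(U,W)$ of words of common length $l$ with $U\in\{0,\dots,p-1\}^l$, $W\in\{0,\dots,q-1\}^l$, $\mathcal M_{p\times q}=\bigcup_l\mathcal M_{p\times q}^l$; $(\emptyset,\emptyset)$ is the empty word. Functions $A:\mathcal M_{p\times q}\to\mathbf K$ have values $A[U,W]$. Shift maps: $(\rho(S,T)A)[U,W]=A[US,WT]$; for a single letter pair $(s,t)$ we write $\rho(s,t)$. $\mathrm{Rec}_{p\times q}(\mathbf K)$ is the set of $A$ with finite-dimensional span of $\{\rho(S,T)A\}$. Matrix product: $(AB)[U,W]=\sum_{V\in\{0,\dots,r-1\}^l}A[U,V]B[V,W]$ for $(U,W)$ of length $l$. *)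

(* Defs.v *)
From HB Require Import structures.
From mathcomp Require Import all_boot all_order all_algebra.
Set Implicit Arguments. Unset Strict Implicit. Unset Printing Implicit Defensive.
Import GRing.Theory.
Local Open Scope ring_scope.

(* Functions on M_{p x q}: pairs (U,W) of words over {0..p-1}, {0..q-1}.
   Only pairs with size U = size W are meaningful; values elsewhere are
   irrelevant and all statements below quantify over pairs of equal length. *)
Definition wfun (K : Type) (p q : nat) := seq 'I_p -> seq 'I_q -> K.

Definition shiftw (K : Type) p q (S : seq 'I_p) (T : seq 'I_q) (A : wfun K p q)
  : wfun K p q := fun U W => A (U ++ S) (W ++ T).

Definition shift1 (K : Type) p q (s : 'I_p) (t : 'I_q) (A : wfun K p q)
  : wfun K p q := fun U W => A (rcons U s) (rcons W t).

Definition Rec (K : fieldType) p q (A : wfun K p q) : Prop :=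
  exists (n : nat) (f : 'I_n -> wfun K p q),
    forall (S : seq 'I_p) (T : seq 'I_q), size S = size T ->
      exists c : 'I_n -> K, forall U W, size U = size W ->
        shiftw S T A U W = \sum_(k < n) c k * f k U W.

Definition wmul (K : fieldType) p r q (A : wfun K p r) (B : wfun K r q)
  : wfun K p q :=
  fun U W => \sum_(V : (size U).-tuple 'I_r) A U (tval V) * B (tval V) W.

(* Main.v *)
Require Import Defs.
From HB Require Import structures.
From mathcomp Require Import all_boot all_order all_algebra.
Import GRing.Theory.
Local Open Scope ring_scope.

Lemma sum_tuple_rcons (R : nmodType) (T : finType) n (F : seq T -> R) :
  \sum_(W : n.+1.-tuple T) F W = \sum_(V : n.-tuple T) \sum_(u : T) F (rcons V u).
Proof.
rewrite pair_bigA /=.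
rewrite (reindex (fun p : n.-tuple T * T => rcons_tuple p.1 p.2)) //=.
exists (fun W : n.+1.-tuple T =>
   (belast_tuple (tnth W ord0) (behead_tuple W), last (tnth W ord0) (behead W))).
- move=> [V u] _ /=.
  have -> : tnth (rcons_tuple V u) ord0 = head u V.
    by rewrite (tnth_nth u) /=; case: V => [[|v V'] ?].
  congr pair; [apply: val_inj => /=|]; case: V => [[|v V'] ?] //=.
  + by rewrite belast_rcons.
  + by rewrite last_rcons.
- move=> W _; apply: val_inj => /=. rewrite -lastI.
  case: W => [[|w W'] Hw] //=.
Qed.

Lemma step (K : fieldType) (p q r d e : nat)
  (A : 'I_d -> wfun K p r) (B : 'I_e -> wfun K r q)
  (rhoA : 'I_p -> 'I_r -> 'M[K]_d) (rhoB : 'I_r -> 'I_q -> 'M[K]_e) :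
  (forall (s : 'I_p) (u : 'I_r) (i : 'I_d) U V, size U = size V ->
     shift1 s u (A i) U V = \sum_(k < d) rhoA s u k i * A k U V) ->
  (forall (u : 'I_r) (t : 'I_q) (j : 'I_e) V W, size V = size W ->
     shift1 u t (B j) V W = \sum_(l < e) rhoB u t l j * B l V W) ->
  forall (i : 'I_d) (j : 'I_e) (s : 'I_p) (t : 'I_q) U W, size U = size W ->
       shift1 s t (wmul (A i) (B j)) U W =
       \sum_(k < d) \sum_(l < e)
          (\sum_(u < r) rhoA s u k i * rhoB u t l j) * wmul (A k) (B l) U W.
Proof.
move=> hA hB i j s t U W hUW.
rewrite /shift1 /wmul size_rcons. rewrite (@sum_tuple_rcons _ _ _ (fun V => A i (rcons U s) V * B j V (rcons W t))).
transitivity (\sum_(V : (size U).-tuple 'I_r) \sum_(u < r) \sum_(k < d) \sum_(l < e)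
   (rhoA s u k i * rhoB u t l j) * (A k U V * B l V W)).
  apply: eq_bigr => V _; apply: eq_bigr => u _.
  have hV : size U = size V by rewrite size_tuple.
  have := hA s u i U V hV; rewrite /shift1 => ->.
  have := hB u t j V W (etrans (esym hV) hUW); rewrite /shift1 => ->.
  rewrite mulr_suml; apply: eq_bigr => k _; rewrite mulr_sumr; apply: eq_bigr => l _.
  by rewrite mulrACA.
symmetry.
under eq_bigr => k _ do under eq_bigr => l _ do rewrite mulr_suml.
under eq_bigr => k _ do under eq_bigr => l _ do under eq_bigr => u _ do rewrite mulr_sumr.
under eq_bigr => k _ do rewrite exchange_big.
under eq_bigr => k _ do under eq_bigr => u _ do rewrite exchange_big.
under eq_bigr => k _ do rewrite exchange_big.
rewrite exchange_big; apply: eq_bigr => V _.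
by rewrite exchange_big.
Qed.

Lemma span_lemma (K : fieldType) (p q r d e : nat)
  (A : 'I_d -> wfun K p r) (B : 'I_e -> wfun K r q)
  (rhoA : 'I_p -> 'I_r -> 'M[K]_d) (rhoB : 'I_r -> 'I_q -> 'M[K]_e) :
  (forall (s : 'I_p) (u : 'I_r) (i : 'I_d) U V, size U = size V ->
     shift1 s u (A i) U V = \sum_(k < d) rhoA s u k i * A k U V) ->
  (forall (u : 'I_r) (t : 'I_q) (j : 'I_e) V W, size V = size W ->
     shift1 u t (B j) V W = \sum_(l < e) rhoB u t l j * B l V W) ->
  forall (i : 'I_d) (j : 'I_e) S T, size S = size T ->
  exists c : 'I_d -> 'I_e -> K, forall U W, size U = size W ->
    shiftw S T (wmul (A i) (B j)) U W =
      \sum_(k < d) \sum_(l < e) c k l * wmul (A k) (B l) U W.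
Proof.
move=> hA hB i j S; elim: S => [|s S IH] [|t T] //= hST.
  exists (fun k l => if (k == i) && (l == j) then 1 else 0) => U W hUW.
  rewrite /shiftw !cats0 (bigD1 i) //= [X in _ + X]big1; last first.
    move=> k hk; rewrite (negbTE hk); rewrite big1 // => l _; by by rewrite mul0r.
  rewrite addr0 (bigD1 j) //= [X in _ + X]big1; last first.
    move=> l hl; by rewrite (negbTE hl) andbF mul0r.
  by rewrite !eqxx /= mul1r addr0.
case: (IH T) => [|c hc]; first by case: hST.
exists (fun k' l' => \sum_(k < d) \sum_(l < e) c k l *
   (\sum_(u < r) rhoA s u k' k * rhoB u t l' l)) => U W hUW.
have -> : shiftw (s :: S) (t :: T) (wmul (A i) (B j)) U W =
   shiftw S T (wmul (A i) (B j)) (rcons U s) (rcons W t).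
  by rewrite /shiftw !cat_rcons.
rewrite hc ?size_rcons ?hUW //.
have hst : forall k l, wmul (A k) (B l) (rcons U s) (rcons W t) = _ :=
  fun k l => @step _ _ _ _ _ _ _ _ _ _ hA hB k l s t _ _ hUW.
transitivity (\sum_(k < d) \sum_(l < e) \sum_(k' < d) \sum_(l' < e) c k l *
          ((\sum_(u < r) rhoA s u k' k * rhoB u t l' l) * wmul (A k') (B l') U W)).
  apply: eq_bigr => k _; apply: eq_bigr => l _; rewrite hst mulr_sumr.
  by apply: eq_bigr => k' _; rewrite mulr_sumr.
under eq_bigr => k' _ do under eq_bigr => l' _ do rewrite mulr_suml.
under eq_bigr => k' _ do under eq_bigr => l' _ do under eq_bigr => k _ do rewrite mulr_suml.
under eq_bigr => k' _ do rewrite exchange_big.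
under eq_bigr => k' _ do under eq_bigr => k _ do rewrite exchange_big.
rewrite [RHS]exchange_big.
under [RHS]eq_bigr => k _ do rewrite exchange_big.
apply: eq_bigr => k _; apply: eq_bigr => l _.
apply: eq_bigr => k' _; apply: eq_bigr => l' _.
by rewrite mulrA.
Qed.

Theorem mainTheorem6 (K : fieldType) (p q r d e : nat)
  (A : 'I_d -> wfun K p r) (B : 'I_e -> wfun K r q)
  (rhoA : 'I_p -> 'I_r -> 'M[K]_d) (rhoB : 'I_r -> 'I_q -> 'M[K]_e) :
  (forall i, Rec (A i)) ->
  (forall j, Rec (B j)) ->
  (forall (s : 'I_p) (u : 'I_r) (i : 'I_d) U V, size U = size V ->
     shift1 s u (A i) U V = \sum_(k < d) rhoA s u k i * A k U V) ->
  (forall (u : 'I_r) (t : 'I_q) (j : 'I_e) V W, size V = size W ->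
     shift1 u t (B j) V W = \sum_(l < e) rhoB u t l j * B l V W) ->
  forall (i : 'I_d) (j : 'I_e),
    Rec (wmul (A i) (B j)) /\
    wmul (A i) (B j) [::] [::] = A i [::] [::] * B j [::] [::] /\
    (forall (s : 'I_p) (t : 'I_q) U W, size U = size W ->
       shift1 s t (wmul (A i) (B j)) U W =
       \sum_(k < d) \sum_(l < e)
          (\sum_(u < r) rhoA s u k i * rhoB u t l j) * wmul (A k) (B l) U W).
Proof.
move=> _ _ hA hB i j; split; last split.
- exists #|{: 'I_d * 'I_e}|.
  exists (fun m => wmul (A (enum_val m).1) (B (enum_val m).2)) => S T hST.
  have [c hc] := @span_lemma _ _ _ _ _ _ _ _ _ _ hA hB i j S T hST.
  exists (fun m => c (enum_val m).1 (enum_val m).2) => U W hUW.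
  rewrite hc // pair_bigA /=.
  exact: (big_enum_val (fun x : 'I_d * 'I_e => c x.1 x.2 * wmul (A x.1) (B x.2) U W)).
- rewrite /wmul /= (eq_bigr (fun _ => A i [::] [::] * B j [::] [::])).
    by rewrite sumr_const card_tuple expn0.
  by move=> V _; rewrite (size0nil (size_tuple V)).
- move=> s t U W hUW; exact: (@step _ _ _ _ _ _ _ _ _ _ hA hB i j s t U W hUW).
Qed.
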